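(* Let $Y$ be a real Banach space. Then $L(\ell_1,Y)$ has octahedral norm if and only if $Y$ has octahedral norm.
   Context: The norm of a Banach space $Z$ is octahedral if for every finite-dimensional subspace $E$ and $\varepsilon>0$ there is $y\in S_Z$ with $\|x+\lambda y\|\ge(1-\varepsilon)(\|x\|+|\lambda|)$ for all $x\in E$, scalars $\lambda$. $L(\ell_1,Y)$ is the space of bounded linear operators from $\ell_1$ to $Y$ with the operator norm. *)

(* Defs.v *)
From Stdlib Require Import Reals Lra List Classical ClassicalEpsilon.
Open Scope R_scope.

Record IsNormedSpace {V : Type} (zero : V) (add : V -> V -> V)
    (scal : R -> V -> V) (norm : V -> R) : Prop := {
  ns_add_assoc : forall x y z, add x (add y z) = add (add x y) z;
  ns_add_comm : forall x y, add x y = add y x;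
  ns_add_zero : forall x, add zero x = x;
  ns_add_opp : forall x, add x (scal (-1) x) = zero;
  ns_scal_one : forall x, scal 1 x = x;
  ns_scal_assoc : forall a b x, scal a (scal b x) = scal (a * b) x;
  ns_scal_distr_r : forall a b x, scal (a + b) x = add (scal a x) (scal b x);
  ns_scal_distr_l : forall a x y, scal a (add x y) = add (scal a x) (scal a y);
  ns_norm_eq0 : forall x, norm x = 0 -> x = zero;
  ns_norm_scal : forall a x, norm (scal a x) = Rabs a * norm x;
  ns_norm_triangle : forall x y, norm (add x y) <= norm x + norm y
}.

Record IsBanach {V : Type} (zero : V) (add : V -> V -> V)
    (scal : R -> V -> V) (norm : V -> R) : Prop := {
  bs_normed : IsNormedSpace zero add scal norm;
  bs_complete : forall u : nat -> V,
    (forall eps, eps > 0 -> exists N, forall m n, (m >= N)%nat -> (n >= N)%nat ->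
        norm (add (u m) (scal (-1) (u n))) < eps) ->
    exists l, forall eps, eps > 0 -> exists N, forall n, (n >= N)%nat ->
        norm (add (u n) (scal (-1) l)) < eps
}.

Inductive Span {V : Type} (zero : V) (add : V -> V -> V) (scal : R -> V -> V)
    (xs : list V) : V -> Prop :=
| span_zero : Span zero add scal xs zero
| span_step : forall c v x, In v xs -> Span zero add scal xs x ->
    Span zero add scal xs (add (scal c v) x).

(** Octahedral norm on the space {v : V | P v} (P is the carrier predicate,
    a subspace of V; use P := fun _ => True for the whole of V).
    Every finite-dimensional subspace E is the span of a finite list xs. *)
Definition Octahedral {V : Type} (P : V -> Prop) (zero : V) (add : V -> V -> V)
    (scal : R -> V -> V) (norm : V -> R) : Prop :=
  forall xs : list V, Forall P xs ->
  forall eps, eps > 0 ->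
  exists y, P y /\ norm y = 1 /\
    forall x lam, Span zero add scal xs x ->
      norm (add x (scal lam y)) >= (1 - eps) * (norm x + Rabs lam).

(** Supremum of a set of reals (0 if empty or unbounded above). *)
Definition Rsup (E : R -> Prop) : R :=
  match excluded_middle_informative (bound E /\ exists x, E x) with
  | left H => proj1_sig (completeness E (proj1 H) (proj2 H))
  | right _ => 0
  end.

Definition l1 : Type :=
  { a : nat -> R | exists s, infinite_sum (fun n => Rabs (a n)) s }.

Definition l1_norm_is (a : l1) (s : R) : Prop :=
  infinite_sum (fun n => Rabs (proj1_sig a n)) s.

Section Ops.
Context {Y : Type} (zero : Y) (add : Y -> Y -> Y) (scal : R -> Y -> Y)
  (norm : Y -> R).

Definition is_linear_op (T : l1 -> Y) : Prop :=
  forall (a b e : l1) (c d : R),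
    (forall n, proj1_sig e n = c * proj1_sig a n + d * proj1_sig b n) ->
    T e = add (scal c (T a)) (scal d (T b)).

Definition is_bounded_op (T : l1 -> Y) : Prop :=
  exists M, forall a s, l1_norm_is a s -> norm (T a) <= M * s.

Definition in_L_l1 (T : l1 -> Y) : Prop := is_linear_op T /\ is_bounded_op T.

Definition op_zero : l1 -> Y := fun _ => zero.
Definition op_add (S T : l1 -> Y) : l1 -> Y := fun a => add (S a) (T a).
Definition op_scal (c : R) (T : l1 -> Y) : l1 -> Y := fun a => scal c (T a).

Definition op_norm (T : l1 -> Y) : R :=
  Rsup (fun r => exists a s, l1_norm_is a s /\ s <= 1 /\ r = norm (T a)).
End Ops.

(* Main.v *)
Require Import Defs.
From Stdlib Require Import Reals Lra Lia Psatz List Classical ClassicalEpsilon FunctionalExtensionality.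
Open Scope R_scope.

Lemma Rsup_ub (E : R -> Prop) r : bound E -> E r -> r <= Rsup E.
Proof. intros Hb Hr. unfold Rsup.
  destruct (excluded_middle_informative _) as [H|H].
  - destruct (completeness E (proj1 H) (proj2 H)) as [m [Hm1 Hm2]]. simpl. apply Hm1; auto.
  - exfalso; apply H; split; eauto. Qed.

Lemma Rsup_lub (E : R -> Prop) B : (exists x, E x) -> (forall r, E r -> r <= B) -> Rsup E <= B.
Proof. intros He Hb. unfold Rsup.
  destruct (excluded_middle_informative _) as [H|H].
  - destruct (completeness E (proj1 H) (proj2 H)) as [m [Hm1 Hm2]]. simpl. apply Hm2. intros x Hx; auto.
  - exfalso; apply H; split; eauto. exists B. intros x Hx; auto. Qed.

Lemma le_eps x y : (forall eps, eps > 0 -> x <= y + eps) -> x <= y.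
Proof. intros H. destruct (Rle_or_lt x y); auto. specialize (H ((x - y)/2) ltac:(lra)). lra. Qed.

Lemma psum_le f s N : (forall n, 0 <= f n) -> infinite_sum f s -> sum_f_R0 f N <= s.
Proof. intros Hf Hs. apply (growing_ineq (sum_f_R0 f)); auto.
  intro n. simpl. specialize (Hf (S n)). lra. Qed.

Lemma sum_nonneg_lim f s : (forall n, 0 <= f n) -> infinite_sum f s -> 0 <= s.
Proof. intros Hf Hs. pose proof (psum_le f s 0 Hf Hs). simpl in H. specialize (Hf 0%nat). lra. Qed.

Lemma isum_ev f g l N0 : (forall M, (M >= N0)%nat -> sum_f_R0 f M = g M) ->
  Un_cv g l -> infinite_sum f l.
Proof. intros H Hg eps He. destruct (Hg eps He) as [N HN0]. exists (max N N0).
  intros n Hn. rewrite H by lia. apply HN0. lia. Qed.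

Lemma Un_cv_const c : Un_cv (fun _ => c) c.
Proof. intros eps He. exists 0%nat. intros. unfold Rdist. replace (c - c) with 0 by ring.
  rewrite Rabs_R0; lra. Qed.

Lemma Un_cv_minus_const (u : nat -> R) l c : Un_cv u l -> Un_cv (fun n => c - u n) (c - l).
Proof. intros H eps He. destruct (H eps He) as [N HN0]. exists N. intros n Hn.
  specialize (HN0 n Hn). unfold Rdist in *. replace (c - u n - (c - l)) with (-(u n - l)) by ring.
  rewrite Rabs_Ropp; auto. Qed.

Definition ekf (k : nat) : nat -> R := fun n => if Nat.eqb n k then 1 else 0.

Lemma sum_ek k M : sum_f_R0 (fun n => Rabs (ekf k n)) M = if Nat.leb k M then 1 else 0.
Proof. induction M; simpl.
  - unfold ekf. destruct k; simpl; [rewrite Rabs_R1|rewrite Rabs_R0]; auto.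
  - rewrite IHM. unfold ekf. destruct (Nat.eqb_spec (S M) k).
    + subst. rewrite Rabs_R1. destruct (Nat.leb_spec (S M) M); destruct (Nat.leb_spec (S M) (S M)); try lia; ring.
    + rewrite Rabs_R0. destruct (Nat.leb_spec k M); destruct (Nat.leb_spec k (S M)); try lia; ring. Qed.

Lemma ek_sum k : infinite_sum (fun n => Rabs (ekf k n)) 1.
Proof. apply (isum_ev _ (fun _ => 1) 1 k). intros M HM. rewrite sum_ek.
  rewrite (proj2 (Nat.leb_le k M)) by lia. auto. apply Un_cv_const. Qed.

Definition e (k : nat) : l1 := exist _ (ekf k) (ex_intro _ 1 (ek_sum k)).
Lemma e_norm k : l1_norm_is (e k) 1.
Proof. apply ek_sum. Qed.

Lemma z_sum : infinite_sum (fun n : nat => Rabs 0) 0.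
Proof. apply (isum_ev _ (fun _ => 0) 0 0). intros M _. induction M; simpl; rewrite ?IHM, Rabs_R0; ring.
  apply Un_cv_const. Qed.
Definition z0 : l1 := exist _ (fun _ => 0) (ex_intro _ 0 z_sum).
Lemma z0_norm : l1_norm_is z0 0.
Proof. apply z_sum. Qed.

Definition truncf (N : nat) (f : nat -> R) : nat -> R := fun n => if Nat.leb n N then f n else 0.
Definition tailf (N : nat) (f : nat -> R) : nat -> R := fun n => if Nat.leb n N then 0 else f n.

Lemma sum_trunc f N M : sum_f_R0 (fun n => Rabs (truncf N f n)) M = sum_f_R0 (fun n => Rabs (f n)) (Nat.min M N).
Proof. induction M; cbn [sum_f_R0].
  - unfold truncf. simpl. destruct N; reflexivity.
  - rewrite IHM. unfold truncf. destruct (Nat.leb_spec (S M) N).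
    + rewrite Nat.min_l by lia. rewrite Nat.min_l by lia. simpl. reflexivity.
    + rewrite Rabs_R0. rewrite Nat.min_r by lia. rewrite Nat.min_r by lia. ring. Qed.

Lemma sum_tail f N M : sum_f_R0 (fun n => Rabs (tailf N f n)) M =
   sum_f_R0 (fun n => Rabs (f n)) M - sum_f_R0 (fun n => Rabs (f n)) (Nat.min M N).
Proof. induction M; cbn [sum_f_R0].
  - unfold tailf. simpl. destruct N; simpl; rewrite ?Rabs_R0; ring.
  - rewrite IHM. unfold tailf. destruct (Nat.leb_spec (S M) N).
    + rewrite Nat.min_l by lia. rewrite Nat.min_l by lia. simpl. rewrite Rabs_R0; ring.
    + rewrite Nat.min_r by lia. rewrite Nat.min_r by lia. ring. Qed.

Lemma trunc_sum f N s : infinite_sum (fun n => Rabs (f n)) s ->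
  infinite_sum (fun n => Rabs (truncf N f n)) (sum_f_R0 (fun n => Rabs (f n)) N).
Proof. intros _. apply (isum_ev _ (fun _ => sum_f_R0 (fun n => Rabs (f n)) N) _ N).
  intros M HM. rewrite sum_trunc, Nat.min_r by lia. auto. apply Un_cv_const. Qed.

Lemma tail_sum f N s : infinite_sum (fun n => Rabs (f n)) s ->
  infinite_sum (fun n => Rabs (tailf N f n)) (s - sum_f_R0 (fun n => Rabs (f n)) N).
Proof. intros H. eapply (isum_ev _ (fun M => sum_f_R0 (fun n => Rabs (f n)) M - sum_f_R0 (fun n => Rabs (f n)) N) _ N).
  intros M HM. rewrite sum_tail, Nat.min_r by lia. auto.
  intros eps He. destruct (H eps He) as [K HK]. exists K. intros n Hn. specialize (HK n Hn).
  unfold Rdist in *. replace (sum_f_R0 (fun n0 : nat => Rabs (f n0)) n - sum_f_R0 (fun n0 : nat => Rabs (f n0)) N -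
   (s - sum_f_R0 (fun n0 : nat => Rabs (f n0)) N)) with (sum_f_R0 (fun n0 : nat => Rabs (f n0)) n - s) by ring. auto. Qed.

Definition trunc (N : nat) (a : l1) : l1.
Proof. refine (exist _ (truncf N (proj1_sig a)) _).
  destruct (proj2_sig a) as [s Hs]. eexists. apply (trunc_sum _ N s Hs). Defined.
Definition tail (N : nat) (a : l1) : l1.
Proof. refine (exist _ (tailf N (proj1_sig a)) _).
  destruct (proj2_sig a) as [s Hs]. eexists. apply (tail_sum _ N s Hs). Defined.
Lemma num eps N L A r G : 0 < eps <= 1 -> 0 <= N -> 0 <= L ->
  (1 - eps/12) * (N + L) <= Rmax A L -> L * r - N <= A -> 1 - 2*(eps/12) <= r <= 1 ->
  A <= G + L * (1 - r) -> G >= (1 - eps) * (N + L).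
Proof. intros He HN HL H1 H2 Hr H3. set (e := eps/12) in *.
  assert (eps = 12 * e) by (unfold e; field). rewrite H. assert (0 < e <= 1/12) by lra.
  unfold Rmax in H1. destruct (Rle_dec A L).
  - assert ((1-e) * N <= e * L) by nra.
    assert (L * (1 - r) <= 2 * e * L) by nra.
    assert (2 * N <= 8 * e * L).
    { assert (11/12 * N <= (1 - e) * N) by nra. nra. }
    nra.
  - assert (L * (1 - r) <= 2 * e * L) by nra. nra.
Qed.

Lemma Rabs_m1 : Rabs (-1) = 1.
Proof. rewrite Rabs_left; lra. Qed.

Section V.
Context {Y : Type} (zero : Y) (add : Y -> Y -> Y) (scal : R -> Y -> Y)
  (norm : Y -> R) (HN : IsNormedSpace zero add scal norm).

Lemma aA x y z : add x (add y z) = add (add x y) z.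
Proof. exact (ns_add_assoc _ _ _ _ HN x y z). Qed.
Lemma aC x y : add x y = add y x.
Proof. exact (ns_add_comm _ _ _ _ HN x y). Qed.
Lemma a0l x : add zero x = x.
Proof. exact (ns_add_zero _ _ _ _ HN x). Qed.
Lemma aopp x : add x (scal (-1) x) = zero.
Proof. exact (ns_add_opp _ _ _ _ HN x). Qed.
Lemma s1 x : scal 1 x = x.
Proof. exact (ns_scal_one _ _ _ _ HN x). Qed.
Lemma sA a b x : scal a (scal b x) = scal (a * b) x.
Proof. exact (ns_scal_assoc _ _ _ _ HN a b x). Qed.
Lemma sDr a b x : scal (a + b) x = add (scal a x) (scal b x).
Proof. exact (ns_scal_distr_r _ _ _ _ HN a b x). Qed.
Lemma sDl a x y : scal a (add x y) = add (scal a x) (scal a y).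
Proof. exact (ns_scal_distr_l _ _ _ _ HN a x y). Qed.
Lemma n0eq x : norm x = 0 -> x = zero.
Proof. exact (ns_norm_eq0 _ _ _ _ HN x). Qed.
Lemma nS a x : norm (scal a x) = Rabs a * norm x.
Proof. exact (ns_norm_scal _ _ _ _ HN a x). Qed.
Lemma nT x y : norm (add x y) <= norm x + norm y.
Proof. exact (ns_norm_triangle _ _ _ _ HN x y). Qed.

Lemma a0r x : add x zero = x.
Proof. rewrite aC; apply a0l. Qed.
Lemma s0 x : scal 0 x = zero.
Proof. replace 0 with (1 + -1) by ring. rewrite sDr, s1. apply aopp. Qed.
Lemma sz c : scal c zero = zero.
Proof. rewrite <- (s0 zero), sA. replace (c*0) with 0 by ring. reflexivity. Qed.
Lemma nz : norm zero = 0.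
Proof. rewrite <- (s0 zero), nS, Rabs_R0; ring. Qed.
Lemma nn x : 0 <= norm x.
Proof. pose proof (nT x (scal (-1) x)). rewrite aopp, nz, nS in H.
  rewrite Rabs_m1 in H. lra. Qed.
Lemma aAC x y z : add (add x y) z = add (add x z) y.
Proof. rewrite <- !aA. f_equal. apply aC. Qed.
Lemma a4 a b c d : add (add a b) (add c d) = add (add a c) (add b d).
Proof. rewrite !aA. f_equal. rewrite aAC. reflexivity. Qed.
Lemma sopp_add p q : scal (-1) (add p q) = add (scal (-1) p) (scal (-1) q).
Proof. apply sDl. Qed.

Definition sub u v := add u (scal (-1) v).
Lemma sub_sym_n u v : norm (sub u v) = norm (sub v u).
Proof. unfold sub. replace (add v (scal (-1) u)) with (scal (-1) (add u (scal (-1) v))).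
  rewrite nS, Rabs_m1; ring.
  rewrite sDl, sA. replace (-1 * -1) with 1 by ring. rewrite s1, aC. reflexivity. Qed.
Lemma sub_chain u v w : sub u w = add (sub u v) (sub v w).
Proof. unfold sub. rewrite <- aA, (aA (scal (-1) v) v), (aC (scal (-1) v) v), aopp, a0l. reflexivity. Qed.
Lemma sub_eq0 l m : sub l m = zero -> l = m.
Proof. unfold sub; intro H.
  rewrite <- (a0r l), <- (aopp m), (aC m), aA, H, a0l. reflexivity. Qed.
Lemma sub_decomp l p : l = add p (sub l p).
Proof. unfold sub. rewrite aA, (aC p l), <- aA, aopp, a0r. reflexivity. Qed.
Lemma sub_lin c d u v l m :
  sub (add (scal c u) (scal d v)) (add (scal c l) (scal d m)) =
  add (scal c (sub u l)) (scal d (sub v m)).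
Proof. unfold sub. rewrite sopp_add, !sA, !sDl, !sA. rewrite a4.
  replace (-1 * c) with (c * -1) by ring. replace (-1 * d) with (d * -1) by ring.
  reflexivity. Qed.
Lemma sub_self u : sub u u = zero.
Proof. apply aopp. Qed.
Lemma n_sub_tri u v : norm u <= norm v + norm (sub u v).
Proof. rewrite (sub_decomp u v) at 1. apply nT. Qed.

Lemma sum_ge_term f n : (forall k, 0 <= f k) -> f n <= sum_f_R0 f n.
Proof. intros Hf. destruct n; simpl. lra. pose proof (cond_pos_sum f n Hf). lra. Qed.

Lemma l1_nonneg a s : l1_norm_is a s -> 0 <= s.
Proof. intros H. apply (sum_nonneg_lim _ _ (fun n => Rabs_pos _) H). Qed.
Lemma l1_coord a s n : l1_norm_is a s -> Rabs (proj1_sig a n) <= s.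
Proof. intros H. eapply Rle_trans. apply (sum_ge_term (fun n => Rabs (proj1_sig a n))).
  intro; apply Rabs_pos. apply psum_le; auto. intro; apply Rabs_pos. Qed.

Notation inL := (in_L_l1 add scal norm).
Notation opn := (op_norm norm).

Lemma opset_bound T : inL T -> bound (fun r => exists a s, l1_norm_is a s /\ s <= 1 /\ r = norm (T a)).
Proof. intros [_ [M HM]]. exists (Rabs M). intros r [a [s [Hs [Hs1 ->]]]].
  pose proof (HM a s Hs). pose proof (l1_nonneg a s Hs). pose proof (Rle_abs M).
  pose proof (Rabs_pos M). nra. Qed.

Lemma opn_ge T a s : inL T -> l1_norm_is a s -> s <= 1 -> norm (T a) <= opn T.
Proof. intros HT Hs Hs1. unfold op_norm. apply Rsup_ub. apply opset_bound; auto. eauto. Qed.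

Lemma opn_le T B : (forall a s, l1_norm_is a s -> s <= 1 -> norm (T a) <= B) -> opn T <= B.
Proof. intros H. unfold op_norm. apply Rsup_lub.
  - exists (norm (T z0)). exists z0, 0. split; [apply z0_norm|split; [lra|auto]].
  - intros r [a [s [Hs [Hs1 ->]]]]. eauto. Qed.

Lemma opn_nn T : inL T -> 0 <= opn T.
Proof. intros HT. eapply Rle_trans; [apply (nn (T z0))|]. apply (opn_ge T z0 0); auto. apply z0_norm. lra. Qed.

Lemma basis T B a s : inL T -> (forall k, norm (T (e k)) <= B) -> l1_norm_is a s ->
  norm (T a) <= B * s.
Proof. intros HT HB Ha. destruct HT as [Hlin [M HM]].
  assert (B0 : 0 <= B) by (eapply Rle_trans; [apply nn|apply (HB 0%nat)]).
  set (Sn := sum_f_R0 (fun n => Rabs (proj1_sig a n))).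
  assert (Htr : forall N, norm (T (trunc N a)) <= B * Sn N).
  { induction N.
    - rewrite (Hlin (e 0) (e 0) (trunc 0 a) (proj1_sig a 0%nat) 0).
      + eapply Rle_trans; [apply nT|]. rewrite !nS, Rabs_R0. unfold Sn; simpl.
        pose proof (HB 0%nat). pose proof (Rabs_pos (proj1_sig a 0%nat)). nra.
      + intro n. simpl. unfold truncf, ekf. destruct n; simpl; [lra|]. destruct n; simpl; lra.
    - rewrite (Hlin (trunc N a) (e (S N)) (trunc (S N) a) 1 (proj1_sig a (S N))).
      + eapply Rle_trans; [apply nT|]. rewrite !nS, Rabs_R1. unfold Sn; simpl. fold Sn.
        pose proof (HB (S N)). pose proof (Rabs_pos (proj1_sig a (S N))). nra.
      + intro n. simpl. unfold truncf, ekf.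
        destruct (Nat.leb_spec n (S N)); destruct (Nat.leb_spec n N); destruct (Nat.eqb_spec n (S N));
          try lia; subst; lra. }
  apply le_eps. intros eps He.
  assert (HM1 : 0 < Rabs M + 1) by (pose proof (Rabs_pos M); lra).
  destruct (Ha (eps / (Rabs M + 1))) as [N HNN].
  { apply Rdiv_lt_0_compat; lra. }
  specialize (HNN N (le_n N)). fold Sn in HNN. unfold Rdist in HNN.
  assert (HSle : Sn N <= s) by (apply psum_le; auto; intro; apply Rabs_pos).
  rewrite Rabs_left1 in HNN by lra.
  rewrite (Hlin (trunc N a) (tail N a) a 1 1).
  - eapply Rle_trans; [apply nT|]. rewrite !nS, Rabs_R1.
    assert (Ht : l1_norm_is (tail N a) (s - Sn N)) by (unfold l1_norm_is; simpl; apply tail_sum; exact Ha).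
    pose proof (HM _ _ Ht). pose proof (Htr N).
    assert (Rabs M * (s - Sn N) <= (Rabs M + 1) * (s - Sn N)) by nra.
    assert ((Rabs M + 1) * (s - Sn N) < eps).
    { apply (Rmult_lt_compat_l (Rabs M + 1)) in HNN; auto.
      replace ((Rabs M + 1) * (eps / (Rabs M + 1))) with eps in HNN by (field; lra). lra. }
    pose proof (Rle_abs M). nra.
  - intro n. simpl. unfold truncf, tailf. destruct (Nat.leb n N); lra.
Qed.

Definition Lim (u : nat -> Y) (l : Y) := forall eps, eps > 0 -> exists N, forall n, (n >= N)%nat -> norm (sub (u n) l) < eps.

Lemma lim_unique u l m : Lim u l -> Lim u m -> l = m.
Proof. intros Hl Hm. apply sub_eq0, n0eq. apply Rle_antisym; [|apply nn].
  apply le_eps. intros eps He. destruct (Hl (eps/2)) as [N1 H1]; [lra|].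
  destruct (Hm (eps/2)) as [N2 H2]; [lra|].
  specialize (H1 (max N1 N2) ltac:(lia)). specialize (H2 (max N1 N2) ltac:(lia)).
  rewrite (sub_chain l (u (max N1 N2)) m). eapply Rle_trans; [apply nT|].
  rewrite sub_sym_n. lra. Qed.

Lemma lim_lin u w l m c d (h : nat -> Y) : Lim u l -> Lim w m ->
  (forall n, h n = add (scal c (u n)) (scal d (w n))) ->
  Lim h (add (scal c l) (scal d m)).
Proof. intros Hu Hw Hh eps He.
  set (K := Rabs c + Rabs d + 1).
  assert (HK : 0 < K) by (unfold K; pose proof (Rabs_pos c); pose proof (Rabs_pos d); lra).
  destruct (Hu (eps / K)) as [N1 H1]. apply Rdiv_lt_0_compat; lra.
  destruct (Hw (eps / K)) as [N2 H2]. apply Rdiv_lt_0_compat; lra.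
  exists (max N1 N2). intros n Hn. rewrite Hh, sub_lin.
  eapply Rle_lt_trans; [apply nT|]. rewrite !nS.
  specialize (H1 n ltac:(lia)). specialize (H2 n ltac:(lia)).
  pose proof (nn (sub (u n) l)). pose proof (nn (sub (w n) m)).
  pose proof (Rabs_pos c). pose proof (Rabs_pos d).
  assert (Hk : K * (eps / K) = eps) by (field; lra).
  assert (Rabs c * norm (sub (u n) l) <= Rabs c * (eps / K)) by (apply Rmult_le_compat_l; lra).
  assert (Rabs d * norm (sub (w n) m) <= Rabs d * (eps / K)) by (apply Rmult_le_compat_l; lra).
  assert (0 < eps / K) by (apply Rdiv_lt_0_compat; lra).
  assert (Rabs c * (eps/K) + Rabs d * (eps/K) + eps/K = eps) by (rewrite <- Hk at 4; unfold K; ring).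
  lra. Qed.

Lemma lim_const_ev u l c k : (forall n, (n >= k)%nat -> u n = c) -> Lim u l -> l = c.
Proof. intros Hc Hl. apply (lim_unique u); auto. intros eps He. exists k. intros n Hn.
  rewrite Hc, sub_self, nz by auto. lra. Qed.

Lemma lim_norm_le u l b : (forall n, norm (u n) <= b) -> Lim u l -> norm l <= b.
Proof. intros Hb Hl. apply le_eps. intros eps He. destruct (Hl eps He) as [N HN0].
  specialize (HN0 N (le_n _)). pose proof (n_sub_tri l (u N)). rewrite sub_sym_n in H.
  specialize (Hb N). lra. Qed.

Fixpoint Ps (v : nat -> Y) (f : nat -> R) (N : nat) : Y :=
  match N with
  | O => scal (f O) (v O)
  | S N => add (Ps v f N) (scal (f (S N)) (v (S N)))
  end.

Section Ser.
Variable v : nat -> Y.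
Hypothesis Hv : forall k, norm (v k) = 1.

Lemma Ps_norm f N : norm (Ps v f N) <= sum_f_R0 (fun n => Rabs (f n)) N.
Proof. induction N; simpl.
  - rewrite nS, Hv. lra.
  - eapply Rle_trans; [apply nT|]. rewrite nS, Hv. lra. Qed.

Lemma Ps_diff f m n : (n <= m)%nat ->
  norm (sub (Ps v f m) (Ps v f n)) <= sum_f_R0 (fun n => Rabs (f n)) m - sum_f_R0 (fun n => Rabs (f n)) n.
Proof. intros Hnm. induction m.
  - assert (n = 0%nat) by lia. subst. rewrite sub_self, nz. lra.
  - destruct (Nat.eq_dec n (S m)).
    + subst. rewrite sub_self, nz. lra.
    + specialize (IHm ltac:(lia)). cbn [Ps sum_f_R0]. unfold sub in *.
      rewrite aAC. eapply Rle_trans; [apply nT|]. rewrite nS, Hv. lra. Qed.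

Lemma Ps_lin f g h c d N : (forall n, h n = c * f n + d * g n) ->
  Ps v h N = add (scal c (Ps v f N)) (scal d (Ps v g N)).
Proof. intros H. induction N; simpl.
  - rewrite H, sDr, !sA. reflexivity.
  - rewrite IHN, H, sDr, !sDl, <- !sA. apply a4. Qed.

Lemma Ps_ek k N : ((N < k)%nat -> Ps v (ekf k) N = zero) /\ ((N >= k)%nat -> Ps v (ekf k) N = v k).
Proof. induction N; simpl.
  - unfold ekf. destruct k; simpl; split; intros; try lia.
    + apply s1.
    + apply s0.
  - destruct IHN as [IH1 IH2].
    assert (E : ekf k (S N) = if Nat.eqb (S N) k then 1 else 0) by reflexivity. rewrite E. destruct (Nat.eqb_spec (S N) k).
    + subst. split; intros; try lia. rewrite IH1 by lia. rewrite s1, a0l. reflexivity.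
    + split; intros.
      * rewrite IH1 by lia. rewrite s0, a0l. reflexivity.
      * rewrite IH2 by lia. rewrite s0, a0r. reflexivity. Qed.

Lemma Ps_cauchy (a : l1) : forall eps, eps > 0 -> exists N, forall m n, (m >= N)%nat -> (n >= N)%nat ->
        norm (add (Ps v (proj1_sig a) m) (scal (-1) (Ps v (proj1_sig a) n))) < eps.
Proof. destruct (proj2_sig a) as [s Hs]. intros eps He.
  destruct (Hs (eps/2)) as [N HN0]; [lra|]. exists N. intros m n Hm Hn.
  pose proof (HN0 m Hm) as Hm'. pose proof (HN0 n Hn) as Hn'. unfold Rdist in *.
  apply Rabs_def2 in Hm'. apply Rabs_def2 in Hn'. fold (sub (Ps v (proj1_sig a) m) (Ps v (proj1_sig a) n)).
  destruct (Nat.le_ge_cases n m).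
  - pose proof (Ps_diff (proj1_sig a) m n H). lra.
  - rewrite sub_sym_n. pose proof (Ps_diff (proj1_sig a) n m H). lra. Qed.

Hypothesis HC : forall u : nat -> Y,
    (forall eps, eps > 0 -> exists N, forall m n, (m >= N)%nat -> (n >= N)%nat ->
        norm (add (u m) (scal (-1) (u n))) < eps) ->
    exists l, forall eps, eps > 0 -> exists N, forall n, (n >= N)%nat ->
        norm (add (u n) (scal (-1) l)) < eps.

Definition Sop (a : l1) : Y :=
  proj1_sig (constructive_indefinite_description _ (HC _ (Ps_cauchy a))).

Lemma Sop_spec a : Lim (Ps v (proj1_sig a)) (Sop a).
Proof. unfold Sop. destruct (constructive_indefinite_description _ _) as [l Hl]. exact Hl. Qed.

Lemma Sop_inL : inL Sop.
Proof. split.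
  - intros a b x c d H. apply (lim_unique (Ps v (proj1_sig x))). apply Sop_spec.
    apply (lim_lin (Ps v (proj1_sig a)) (Ps v (proj1_sig b))); try apply Sop_spec.
    intro n. apply Ps_lin. exact H.
  - exists 1. intros a s Hs. rewrite Rmult_1_l. apply (lim_norm_le (Ps v (proj1_sig a))).
    + intro n. eapply Rle_trans; [apply Ps_norm|]. apply psum_le; auto. intro; apply Rabs_pos.
    + apply Sop_spec. Qed.

Lemma Sop_e k : Sop (e k) = v k.
Proof. apply (lim_const_ev (Ps v (proj1_sig (e k))) _ _ k).
  intros n Hn. apply (Ps_ek k n). auto. apply Sop_spec. Qed.

Lemma Sop_norm : opn Sop = 1.
Proof. apply Rle_antisym.
  - apply opn_le. intros a s Hs Hs1. destruct Sop_inL as [_ _].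
    apply (lim_norm_le (Ps v (proj1_sig a))).
    + intro n. eapply Rle_trans; [apply Ps_norm|]. eapply Rle_trans; [apply psum_le; eauto|]; auto.
      intro; apply Rabs_pos.
    + apply Sop_spec.
  - rewrite <- (Hv 0%nat), <- Sop_e. apply (opn_ge _ _ 1). apply Sop_inL. apply e_norm. lra. Qed.
End Ser.

Lemma inL_zero : inL (op_zero zero).
Proof. split.
  - intros a b x c d _. unfold op_zero. rewrite !sz, a0l. reflexivity.
  - exists 0. intros a s _. unfold op_zero. rewrite nz. lra. Qed.

Lemma inL_scal c V : inL V -> inL (op_scal scal c V).
Proof. intros [HV [M HM]]. split.
  - intros a b x c' d H. unfold op_scal. rewrite (HV a b x c' d H), sDl, !sA.
    rewrite (Rmult_comm c c'), (Rmult_comm c d). reflexivity.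
  - exists (Rabs c * Rabs M). intros a s Hs. unfold op_scal. rewrite nS.
    pose proof (HM a s Hs). pose proof (l1_nonneg a s Hs). pose proof (Rabs_pos c).
    pose proof (Rle_abs M). pose proof (Rabs_pos M).
    assert (norm (V a) <= Rabs M * s) by nra. rewrite Rmult_assoc. apply Rmult_le_compat_l; auto. Qed.

Lemma inL_add A B : inL A -> inL B -> inL (op_add add A B).
Proof. intros [HA [MA HMA]] [HB [MB HMB]]. split.
  - intros a b x c d H. unfold op_add. rewrite (HA a b x c d H), (HB a b x c d H), !sDl. apply a4.
  - exists (MA + MB). intros a s Hs. unfold op_add. eapply Rle_trans; [apply nT|].
    pose proof (HMA a s Hs). pose proof (HMB a s Hs). lra. Qed.

Lemma span_inL Ts X : Forall inL Ts -> Span (op_zero zero) (op_add add) (op_scal scal) Ts X -> inL X.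
Proof. intros HTs H. induction H.
  - apply inL_zero.
  - apply inL_add; auto. apply inL_scal. rewrite Forall_forall in HTs. auto. Qed.

Lemma span_ev Ts X n : Span (op_zero zero) (op_add add) (op_scal scal) Ts X ->
  Span zero add scal (map (fun T => T (e n)) Ts) (X (e n)).
Proof. intros H. induction H.
  - apply span_zero.
  - unfold op_add, op_scal. apply span_step; auto. apply (in_map (fun T => T (e n))). auto. Qed.

Lemma fwd (HC : forall u : nat -> Y,
    (forall eps, eps > 0 -> exists N, forall m n, (m >= N)%nat -> (n >= N)%nat ->
        norm (add (u m) (scal (-1) (u n))) < eps) ->
    exists l, forall eps, eps > 0 -> exists N, forall n, (n >= N)%nat ->
        norm (add (u n) (scal (-1) l)) < eps) :
  Octahedral (fun _ : Y => True) zero add scal norm ->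
  Octahedral inL (op_zero zero) (op_add add) (op_scal scal) opn.
Proof. intros HO Ts HTs eps Heps.
  assert (Hy : forall n, exists y, True /\ norm y = 1 /\ forall x lam,
     Span zero add scal (map (fun T => T (e n)) Ts) x ->
     norm (add x (scal lam y)) >= (1 - eps) * (norm x + Rabs lam)).
  { intro n. apply HO; auto. apply Forall_forall. auto. }
  set (v := fun n => proj1_sig (constructive_indefinite_description _ (Hy n))).
  assert (Hv : forall n, True /\ norm (v n) = 1 /\ forall x lam,
     Span zero add scal (map (fun T => T (e n)) Ts) x ->
     norm (add x (scal lam (v n))) >= (1 - eps) * (norm x + Rabs lam)).
  { intro n. unfold v. destruct (constructive_indefinite_description _ _) as [y Hy']. exact Hy'. }
  assert (Hv1 : forall n, norm (v n) = 1) by (intro n; apply Hv).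
  exists (Sop v Hv1 HC). split; [apply Sop_inL|]. split; [apply Sop_norm|].
  intros X lam HX.
  set (S := Sop v Hv1 HC).
  assert (HXL : inL X) by (eapply span_inL; eauto).
  assert (HSL : inL S) by apply Sop_inL.
  set (Z := op_add add X (op_scal scal lam S)).
  assert (HZ : inL Z) by (apply inL_add; auto; apply inL_scal; auto).
  assert (Hn : forall n, (1 - eps) * (norm (X (e n)) + Rabs lam) <= opn Z).
  { intro n. eapply Rle_trans; [|apply (opn_ge Z (e n) 1); auto; [apply e_norm|lra]].
    unfold Z, op_add, op_scal. unfold S. rewrite Sop_e.
    apply Rge_le. apply Hv. apply span_ev. auto. }
  pose proof (opn_nn Z HZ). pose proof (opn_nn X HXL). pose proof (Rabs_pos lam).
  destruct (Rlt_or_le eps 1) as [Hlt|Hge].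
  2:{ apply Rle_ge. assert ((1 - eps) * (opn X + Rabs lam) <= 0) by nra. lra. }
  set (B := opn Z / (1 - eps) - Rabs lam).
  assert (HB : forall k, norm (X (e k)) <= B).
  { intro k. specialize (Hn k). unfold B. apply (Rmult_le_reg_l (1 - eps)). lra.
    replace ((1 - eps) * (opn Z / (1 - eps) - Rabs lam)) with (opn Z - (1-eps) * Rabs lam) by (field; lra).
    lra. }
  assert (B0 : 0 <= B) by (eapply Rle_trans; [apply nn|apply (HB 0%nat)]).
  assert (HXB : opn X <= B).
  { apply opn_le. intros a s Hs Hs1. eapply Rle_trans. apply (basis X B a s); auto. nra. }
  apply Rle_ge. unfold B in HXB.
  assert ((1 - eps) * opn X <= (1 - eps) * (opn Z / (1 - eps) - Rabs lam)) by (apply Rmult_le_compat_l; lra).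
  replace ((1 - eps) * (opn Z / (1 - eps) - Rabs lam)) with (opn Z - (1-eps) * Rabs lam) in H2 by (field; lra).
  lra.
Qed.

Definition Tmap (x : Y) : l1 -> Y := fun a => scal (proj1_sig a 0%nat) x.

Lemma Tmap_inL x : inL (Tmap x).
Proof. split.
  - intros a b w c d H. unfold Tmap. rewrite H, sDr, !sA. reflexivity.
  - exists (norm x). intros a s Hs. unfold Tmap. rewrite nS.
    pose proof (l1_coord a s 0 Hs). pose proof (nn x). rewrite (Rmult_comm (norm x)).
    apply Rmult_le_compat_r; auto. Qed.

Lemma span_Tmap xs x : Span zero add scal xs x ->
  Span (op_zero zero) (op_add add) (op_scal scal) (map Tmap xs) (Tmap x).
Proof. intros H. induction H.
  - replace (Tmap zero) with (op_zero zero : l1 -> Y). apply span_zero.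
    extensionality a. unfold Tmap, op_zero. rewrite sz. reflexivity.
  - replace (Tmap (add (scal c v) x)) with (op_add add (op_scal scal c (Tmap v)) (Tmap x)).
    apply span_step; auto. apply in_map; auto.
    extensionality a. unfold Tmap, op_add, op_scal. rewrite sDl, !sA, Rmult_comm. reflexivity. Qed.

Lemma span_cons z xs x : Span zero add scal xs x -> Span zero add scal (z :: xs) x.
Proof. intros H. induction H. apply span_zero. apply span_step; auto. right; auto. Qed.

Lemma Tmap_e0 x : Tmap x (e 0) = x.
Proof. unfold Tmap. simpl. apply s1. Qed.

Lemma bwd : Octahedral inL (op_zero zero) (op_add add) (op_scal scal) opn ->
  Octahedral (fun _ : Y => True) zero add scal norm.
Proof. intros HO xs _ eps Heps.
  destruct (HO nil (Forall_nil _) 1 ltac:(lra)) as [S0 [HS0 [HS0n _]]].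
  assert (Hz : exists n, norm (S0 (e n)) > 0).
  { apply NNPP. intro Hc.
    assert (forall k, norm (S0 (e k)) <= 0).
    { intro k. destruct (Rle_or_lt (norm (S0 (e k))) 0); auto. exfalso; apply Hc; exists k; lra. }
    assert (opn S0 <= 0).
    { apply opn_le. intros a s Hs Hs1. eapply Rle_trans. apply (basis S0 0 a s); auto. lra. }
    lra. }
  destruct Hz as [n0 Hz]. set (z := S0 (e n0)) in *.
  set (x1 := scal (/ norm z) z).
  assert (Hx1 : norm x1 = 1).
  { unfold x1. rewrite nS, Rabs_right. field. lra. apply Rle_ge, Rlt_le, Rinv_0_lt_compat. lra. }
  set (eps0 := Rmin eps 1).
  assert (He0 : 0 < eps0 <= 1) by (unfold eps0; unfold Rmin; destruct (Rle_dec eps 1); lra).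
  set (e' := eps0 / 12).
  assert (Fl : Forall inL (map Tmap (x1 :: xs))).
  { apply Forall_forall. intros T HT. apply in_map_iff in HT. destruct HT as [x [<- _]]. apply Tmap_inL. }
  destruct (HO _ Fl e' ltac:(unfold e'; lra)) as [Sx [HS [HSn HSi]]].
  set (y0 := Sx (e 0)).
  assert (Hy0le : norm y0 <= 1) by (rewrite <- HSn; apply (opn_ge Sx (e 0) 1); auto; [apply e_norm|lra]).
  assert (Hup : forall x lam, opn (op_add add (Tmap x) (op_scal scal lam Sx)) <=
                 Rmax (norm (add x (scal lam y0))) (Rabs lam)).
  { intros x lam. apply opn_le. intros a s Hs Hs1.
    assert (HB : forall k, norm (op_add add (Tmap x) (op_scal scal lam Sx) (e k)) <=
                 Rmax (norm (add x (scal lam y0))) (Rabs lam)).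
    { intro k. unfold op_add, op_scal, Tmap. destruct k; simpl.
      - rewrite s1. apply Rmax_l.
      - rewrite s0, a0l, nS. eapply Rle_trans; [|apply Rmax_r].
        assert (norm (Sx (e (S k))) <= 1) by (rewrite <- HSn; apply (opn_ge Sx _ 1); auto; [apply e_norm|lra]).
        pose proof (Rabs_pos lam). pose proof (nn (Sx (e (S k)))). nra. }
    eapply Rle_trans. apply (basis _ (Rmax (norm (add x (scal lam y0))) (Rabs lam)) a s); auto.
    apply inL_add. apply Tmap_inL. apply inL_scal; auto.
    assert (0 <= Rmax (norm (add x (scal lam y0))) (Rabs lam)) by
      (eapply Rle_trans; [apply Rabs_pos|apply Rmax_r]).
    pose proof (l1_nonneg a s Hs). nra. }
  assert (Hlow : forall x lam, Span zero add scal (x1 :: xs) x ->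
     (1 - e') * (norm x + Rabs lam) <= Rmax (norm (add x (scal lam y0))) (Rabs lam)).
  { intros x lam Hx. eapply Rle_trans; [|apply Hup].
    pose proof (HSi (Tmap x) lam (span_Tmap _ _ Hx)) as Hi. apply Rge_le in Hi.
    eapply Rle_trans; [|exact Hi]. apply Rmult_le_compat_l. unfold e'; lra.
    apply Rplus_le_compat_r. rewrite <- (Tmap_e0 x) at 1. apply (opn_ge _ (e 0) 1).
    apply Tmap_inL. apply e_norm. lra. }
  assert (Hsx1 : Span zero add scal (x1 :: xs) (add (scal 1 x1) zero))
    by (apply span_step; [left; auto| apply span_zero]).
  rewrite s1, a0r in Hsx1.
  pose proof (Hlow x1 1 Hsx1) as H1. rewrite s1, Rabs_R1, Hx1 in H1.
  assert (Hax : 2 - 2 * e' <= norm (add x1 y0)).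
  { unfold Rmax in H1. destruct (Rle_dec (norm (add x1 y0)) 1); unfold e' in *; lra. }
  pose proof (nT x1 y0). rewrite Hx1 in H.
  set (r := norm y0) in *.
  assert (Hr : 1 - 2 * e' <= r <= 1) by lra.
  assert (Hr0 : 0 < r) by (unfold e' in Hr; lra).
  exists (scal (/ r) y0). split; [auto|]. split.
  { rewrite nS, Rabs_right. fold r. field. lra. apply Rle_ge, Rlt_le, Rinv_0_lt_compat. lra. }
  intros x lam Hx.
  pose proof (Hlow x lam (span_cons x1 xs x Hx)) as Hl.
  assert (Hid : add x (scal lam y0) = add (add x (scal lam (scal (/ r) y0))) (scal (lam - lam * / r) y0)).
  { rewrite sA, <- aA, <- sDr. f_equal. f_equal. ring. }
  assert (Hid2 : scal lam y0 = add (add x (scal lam y0)) (scal (-1) x)).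
  { rewrite aAC, aopp, a0l. reflexivity. }
  assert (HA1 : norm (add x (scal lam y0)) <= norm (add x (scal lam (scal (/ r) y0))) + Rabs lam * (1 - r)).
  { rewrite Hid at 1. eapply Rle_trans; [apply nT|]. apply Rplus_le_compat_l. rewrite nS. fold r.
    assert (Hir : 1 <= / r) by (apply (Rmult_le_reg_r r); [lra| rewrite Rinv_l; lra]).
    replace (lam - lam * / r) with (lam * (1 - / r)) by ring. rewrite Rabs_mult.
    rewrite (Rabs_left1 (1 - / r)) by lra. right. field. lra. }
  assert (HA2 : Rabs lam * r - norm x <= norm (add x (scal lam y0))).
  { pose proof (nT (add x (scal lam y0)) (scal (-1) x)). rewrite <- Hid2, !nS, Rabs_m1 in H0. fold r in H0. lra. }
  pose proof (num eps0 (norm x) (Rabs lam) (norm (add x (scal lam y0))) r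
     (norm (add x (scal lam (scal (/ r) y0)))) He0 (nn x) (Rabs_pos lam) Hl HA2 Hr HA1) as Hf.
  apply Rle_ge. apply Rge_le in Hf. eapply Rle_trans; [|exact Hf].
  apply Rmult_le_compat_r. pose proof (nn x); pose proof (Rabs_pos lam); lra.
  pose proof (Rmin_l eps 1). fold eps0 in H0. lra.
Qed.
End V.

Theorem mainTheorem15 (Y : Type) (zero : Y) (add : Y -> Y -> Y)
    (scal : R -> Y -> Y) (norm : Y -> R)
    (HY : IsBanach zero add scal norm) :
  Octahedral (in_L_l1 add scal norm) (op_zero zero) (op_add add)
    (op_scal scal) (op_norm norm)
  <-> Octahedral (fun _ : Y => True) zero add scal norm.
Proof.
  destruct HY as [HN HC]. split.
  - apply (bwd zero add scal norm HN).
  - apply (fwd zero add scal norm HN HC).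
Qed.
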